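(* For every even integer $n\geq 4$ and every integer $m\geq 2$, the graph $mW_n$ (the disjoint union of $m$ copies of the wheel $W_n$) is $C_3$-supermagic.
   Context: All graphs are finite and simple. For a graph $H$, a graph $G=(V,E)$ has an $H$-covering if every edge of $G$ belongs to a subgraph of $G$ isomorphic to $H$. For such $G$, an $H$-magic labeling is a bijection $\lambda: V\cup E\to\{1,2,\dots,|V|+|E|\}$ for which there is a constant $c$ such that for every subgraph $H'=(V',E')$ of $G$ isomorphic to $H$, $\sum_{v\in V'}\lambda(v)+\sum_{e\in E'}\lambda(e)=c$. It is $H$-supermagic if moreover $\{\lambda(v):v\in V\}=\{1,\dots,|V|\}$; $G$ is $H$-supermagic if it admits such a labeling. $C_k$ is the cycle of length $k$. $mG$ denotes the disjoint union of $m$ copies of $G$. The wheel $W_n=K_1+C_n$ has vertices $c,v_1,\dots,v_n$ and edges $cv_i$ ($1\le i\le n$) and $v_iv_{i+1}$ ($1\le i\le n$, indices modulo $n$). *)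

(* Defs.v *)
From mathcomp Require Import all_boot.
Set Implicit Arguments. Unset Strict Implicit. Unset Printing Implicit Defensive.

Record sgraph := SGraph {
  vert : finType;
  adj : rel vert;
  adj_sym : symmetric adj;
  adj_irr : irreflexive adj }.

Definition symrel (T : finType) (r : rel T) : rel T :=
  fun x y => (x != y) && (r x y || r y x).

Lemma symrel_sym (T : finType) (r : rel T) : symmetric (symrel r).
Proof. by move=> x y; rewrite /symrel eq_sym orbC. Qed.

Lemma symrel_irr (T : finType) (r : rel T) : irreflexive (symrel r).
Proof. by move=> x; rewrite /symrel eqxx. Qed.

Definition mkSG (T : finType) (r : rel T) : sgraph :=
  SGraph (@symrel_sym T r) (@symrel_irr T r).

Definition edges (G : sgraph) : {set {set vert G}} :=
  [set A : {set vert G} | [exists x, exists y, adj x y && (A == [set x; y])]].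

Definition cycle_graph (k : nat) : sgraph :=
  @mkSG 'I_k (fun i j : 'I_k => j == (i.+1 %% k) :> nat).

(* Wheel W_n = K_1 + C_n: vertices None (= centre c) and Some i (= v_{i+1}). *)
Definition wheel_rel (n : nat) : rel (option 'I_n) :=
  fun x y => match x, y with
             | None, Some _ => true
             | Some i, Some j => (j == (i.+1 %% n) :> nat)
             | _, _ => false
             end.
Definition wheel (n : nat) : sgraph := @mkSG (option 'I_n) (@wheel_rel n).

Definition copies_rel (m : nat) (G : sgraph) : rel ('I_m * vert G) :=
  fun x y => (x.1 == y.1) && adj x.2 y.2.
Definition copies (m : nat) (G : sgraph) : sgraph :=
  @mkSG ('I_m * vert G)%type (@copies_rel m G).

(* Embeddings of H into G: injective homomorphisms. The subgraphs of G
   isomorphic to H are exactly the images (f(V_H), f(E_H)) of embeddings. *)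
Definition embedding (H G : sgraph) (f : vert H -> vert G) : Prop :=
  injective f /\ (forall u v, adj u v -> adj (f u) (f v)).

Definition H_covering (H G : sgraph) : Prop :=
  forall x y : vert G, adj x y ->
    exists f : vert H -> vert G, embedding f /\
      exists u v : vert H, [/\ adj u v, f u = x & f v = y].

Definition weight (H G : sgraph) (lv : vert G -> nat) (le : {set vert G} -> nat)
  (f : vert H -> vert G) : nat :=
  \sum_(u : vert H) lv (f u) + \sum_(e in edges H) le (f @: e).

Definition total_labeling (G : sgraph) (lv : vert G -> nat) (le : {set vert G} -> nat) :=
  perm_eq ([seq lv x | x <- enum (vert G)] ++ [seq le e | e <- enum (edges G)])
          (iota 1 (#|vert G| + #|edges G|)).

Definition H_magic_labeling (H G : sgraph) lv le : Prop :=
  @total_labeling G lv le /\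
  exists c, forall f : vert H -> vert G, embedding f -> weight lv le f = c.

Definition H_supermagic_labeling (H G : sgraph) lv le : Prop :=
  @H_magic_labeling H G lv le /\
  perm_eq [seq lv x | x <- enum (vert G)] (iota 1 #|vert G|).

Definition H_supermagic (H G : sgraph) : Prop :=
  H_covering H G /\ exists lv le, @H_supermagic_labeling H G lv le.

(* Main.v *)
Require Import Defs.
From mathcomp Require Import all_boot.
From mathcomp Require Import zify.
Set Implicit Arguments. Unset Strict Implicit. Unset Printing Implicit Defensive.


Definition vr (n i : nat) : nat :=
  let h := n./2 in
  if i + 2 <= h then n - 2*i else if i + 1 == h then 3 else if i == h then 2
  else if i == h + 1 then 1 else 2*i + 1 - n.
Definition sr (n i : nat) : nat :=
  let h := n./2 in
  if i + 2 <= h then 2 + 4*i else if i + 1 == h then 2*n - 3 else if i == h then 2*n - 1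
  else if i == h + 1 then 2*n - 2 else 4*n - 4*i.
Definition rr (n i : nat) : nat :=
  let h := n./2 in
  if i + 1 == n then 2*n - 4 else
  if i + 2 <= h then 2*n - 5 - 4*i else if i + 1 == h then 0 else if i == h then 1
  else if i == h + 1 then 5 else 4*i + 1 - 2*n.

Lemma half_even n : ~~ odd n -> n = 2 * n./2.
Proof. move=> H; rewrite -[n in LHS]odd_double_half (negbTE H) /=; lia. Qed.

Ltac splitall := repeat (case: ifP => ?).

Section R.
Variable n : nat.
Hypothesis ev : ~~ odd n.
Hypothesis n4 : 4 <= n.

Lemma vr_range i : i < n -> 0 < vr n i <= n.
Proof. move=> Hi; have := half_even ev; rewrite /vr; set h := n./2 => Hh; splitall; lia. Qed.

Lemma vr_inj i j : i < n -> j < n -> vr n i = vr n j -> i = j.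
Proof. move=> Hi Hj; have := half_even ev; rewrite /vr; set h := n./2 => Hh; splitall; lia. Qed.

Lemma sr_range i : i < n -> sr n i < 2 * n.
Proof. move=> Hi; have := half_even ev; rewrite /sr; set h := n./2 => Hh; splitall; lia. Qed.
Lemma rr_range i : i < n -> rr n i < 2 * n.
Proof. move=> Hi; have := half_even ev; rewrite /rr; set h := n./2 => Hh; splitall; lia. Qed.
Lemma sr_inj i j : i < n -> j < n -> sr n i = sr n j -> i = j.
Proof. move=> Hi Hj; have := half_even ev; rewrite /sr; set h := n./2 => Hh; splitall; lia. Qed.
Lemma rr_inj i j : i < n -> j < n -> rr n i = rr n j -> i = j.
Proof. move=> Hi Hj; have := half_even ev; rewrite /rr; set h := n./2 => Hh; splitall; lia. Qed.
Lemma sr_rr i j : i < n -> j < n -> sr n i = rr n j -> False.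
Proof. move=> Hi Hj; have := half_even ev; rewrite /sr /rr; set h := n./2 => Hh; splitall; lia. Qed.

Lemma tri_sum i : i < n ->
  vr n i + vr n (i.+1 %% n) + sr n i + sr n (i.+1 %% n) + rr n i = 4 * n + 1.
Proof.
move=> Hi; case: (ltnP i.+1 n) => Hs.
  rewrite modn_small //; have := half_even ev; rewrite /vr /sr /rr; set h := n./2 => Hh; splitall; lia.
have -> : i.+1 = n by lia. rewrite modnn.
have := half_even ev; rewrite /vr /sr /rr; set h := n./2 => Hh; splitall; lia.
Qed.
End R.



Lemma modS (i n : nat) : i < n -> i.+1 %% n = if i.+1 == n then 0 else i.+1.
Proof. move=> H; case: ifP => [/eqP ->|/negbT Hn]; first by rewrite modnn.
by rewrite modn_small // ltn_neqAle Hn H. Qed.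

Section G.
Variables m n : nat.
Hypothesis n4 : 4 <= n.

Definition V := ('I_m * option 'I_n)%type.
Definition GG := copies m (wheel n).

Lemma valS (i : 'I_n) : val (ordS i) = if i.+1 == n then 0 else i.+1.
Proof. by rewrite /= modS. Qed.

Lemma wadjE (a b : option 'I_n) : @adj (wheel n) a b =
  match a, b with
  | None, None => false
  | Some i, Some j => (j == ordS i) || (i == ordS j)
  | _, _ => true end.
Proof.
rewrite /= /symrel /=; case: a => [i|]; case: b => [j|] //=.
rewrite -!val_eqE /= !modS //.
have Hi := ltn_ord i; have Hj := ltn_ord j.
case: (eqVneq i j) => [->|Hij] /=.
  rewrite eqxx /=; apply/esym/negbTE; case: ifP => ?; lia.
have -> : Some i != Some j by apply/eqP => -[]; apply/eqP.
by [].
Qed.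

Lemma adjGE (x y : V) : @adj GG x y = (x.1 == y.1) && @adj (wheel n) x.2 y.2.
Proof.
rewrite /GG /= /symrel /copies_rel /=.
case: x => k a; case: y => l b /=.
case: (eqVneq k l) => [<-|] //=; rewrite ?andbF //.
case: (eqVneq a b) => [->|Hab]; first by rewrite !eqxx.
have -> : (k, a) != (k, b) by rewrite xpair_eqE negb_and Hab orbT.
by rewrite /symrel Hab eq_sym Hab /=; case: (wheel_rel a b); case: (wheel_rel b a).
Qed.

Definition ER := ('I_m * (bool * 'I_n))%type.
Definition sset (e : ER) : {set V} :=
  let: (k, (b, i)) := e in
  if b then [set (k, Some i); (k, Some (ordS i))] else [set (k, None); (k, Some i)].

Lemma sset_inj : injective sset.
Proof.
move=> [k [b i]] [l [c j]] /setP H.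
suff [E1 [E2 E3]] : val k = val l /\ b = c /\ val i = val j.
  by rewrite (val_inj E1) (val_inj E3) E2.
have Hi := ltn_ord i; have Hj := ltn_ord j.
case: b H; case: c => H.
- have H1 := H (k, Some i); have H2 := H (k, Some (ordS i)).
  rewrite !inE !xpair_eqE !eqxx /= in H1 H2.
  move: H1 H2; rewrite !(inj_eq (@Some_inj _)) -!val_eqE /= !modS //.
  repeat case: ifP => ?; lia.
- have := H (l, None); rewrite !inE !xpair_eqE !eqxx /=.
  by rewrite !andbF.
- have := H (k, None); rewrite !inE !xpair_eqE !eqxx /=.
  by rewrite !andbF.
- have H1 := H (k, Some i).
  rewrite !inE !xpair_eqE !eqxx /= in H1.
  by move/esym: H1 => /orP [/andP [_ //] | /andP [/eqP -> /eqP [->]]].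
Qed.

Lemma sset_edges e : sset e \in edges GG.
Proof.
case: e => k [[] i]; rewrite inE.
  apply/existsP; exists (k, Some i); apply/existsP; exists (k, Some (ordS i)).
  by rewrite adjGE wadjE /= !eqxx.
apply/existsP; exists (k, None); apply/existsP; exists (k, Some i).
by rewrite adjGE wadjE /= !eqxx.
Qed.

Lemma edges_sset A : A \in edges GG -> exists e, A = sset e.
Proof.
rewrite inE => /existsP [x /existsP [y /andP [Hxy /eqP ->]]].
move: Hxy; rewrite adjGE wadjE; case: x => k a; case: y => l b /= /andP [/eqP <-].
case: a => [i|]; case: b => [j|] //.
- case/orP => /eqP ->; first by exists (k, (true, i)).
  by exists (k, (true, j)); rewrite /= setUC.
- by exists (k, (false, i)); rewrite /= setUC.
- by exists (k, (false, j)).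
Qed.

Hypothesis ev : ~~ odd n.

Definition rk (x : option 'I_n) : nat := if x is Some i then vr n i else 0.
Definition lv (x : V) : nat := m * rk x.2 + x.1 + 1.
Definition erk (e : ER) : nat := if e.2.1 then rr n e.2.2 else sr n e.2.2.
Definition elab (e : ER) : nat := m * n.+1 + m * erk e + (m - e.1).
Definition le (A : {set V}) : nat :=
  if [pick e | sset e == A] is Some e then elab e else 0.

Lemma le_sset e : le (sset e) = elab e.
Proof.
rewrite /le; case: pickP => [e' /eqP /sset_inj -> // | /(_ e)].
by rewrite eqxx.
Qed.

Lemma divmod_inj a a' b b' : b < m -> b' < m -> m * a + b = m * a' + b' -> a = a' /\ b = b'.
Proof.
move=> Hb Hb' E.
have Hm : 0 < m by lia.
have E1 := congr1 (divn^~ m) E; have E2 := congr1 (modn^~ m) E; move: E1 E2 => /=.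
rewrite [m * a]mulnC [m * a']mulnC !divnMDl // !modnMDl !divn_small // !modn_small //.
by rewrite !addn0.
Qed.

Lemma rk_inj : injective rk.
Proof.
case=> [i|]; case=> [j|] //=.
- by move/(vr_inj ev n4 (ltn_ord i) (ltn_ord j))/val_inj => ->.
- by have := vr_range ev n4 (ltn_ord i); lia.
- by have := vr_range ev n4 (ltn_ord j); lia.
Qed.

Lemma rk_le x : rk x <= n.
Proof. case: x => [i|] //=; have := vr_range ev n4 (ltn_ord i); lia. Qed.

Lemma lv_inj : injective lv.
Proof.
case=> k a [l b]; rewrite /lv /= => /eqP; rewrite eqn_add2r => /eqP.
case/(divmod_inj (ltn_ord k) (ltn_ord l)) => /rk_inj -> /val_inj -> //.
Qed.

Lemma lv_range x : 0 < lv x <= m * n.+1.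
Proof.
case: x => k a; rewrite /lv /=; have := rk_le a; have := ltn_ord k.
move: (rk a) => r Hk Hr.
have H1 : m * r <= m * n by rewrite leq_mul2l Hr orbT.
rewrite mulnS; lia.
Qed.




Lemma erk_lt e : erk e < 2 * n.
Proof. case: e => k [[] i]; rewrite /erk /=; [exact: rr_range | exact: sr_range]. Qed.

Lemma erk_inj2 (e e' : ER) : e.2 <> e'.2 -> erk e <> erk e'.
Proof.
case: e => k [b i]; case: e' => l [c j] /=; rewrite /erk /=.
case: b; case: c => /= Hne E.
- by apply: Hne; rewrite (val_inj (rr_inj ev n4 (ltn_ord i) (ltn_ord j) E)).
- exact: (sr_rr ev n4 (ltn_ord j) (ltn_ord i) (esym E)).
- exact: (sr_rr ev n4 (ltn_ord i) (ltn_ord j) E).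
- by apply: Hne; rewrite (val_inj (sr_inj ev n4 (ltn_ord i) (ltn_ord j) E)).
Qed.

Lemma elab_inj : injective elab.
Proof.
case=> k bi [l cj]; rewrite /elab /= => /eqP; rewrite -!addnA eqn_add2l => /eqP E.
have Hk := ltn_ord k; have Hl := ltn_ord l.
have E' : m * erk (k, bi) + (m - k - 1) = m * erk (l, cj) + (m - l - 1) by lia.
case: (divmod_inj _ _ E'); [lia|lia|] => Ee Ek.
have -> : k = l by apply: ord_inj; lia.
case: (eqVneq bi cj) => [-> //|/eqP Hne].
by case: (erk_inj2 (e := (k, bi)) (e' := (l, cj)) Hne Ee).
Qed.

Lemma elab_range e : m * n.+1 < elab e <= m * n.+1 + m * (2 * n).
Proof.
case: e => k bi; rewrite /elab /=; have := erk_lt (k, bi); have := ltn_ord k.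
move: (erk _) => r Hk Hr.
have H1 : m * r.+1 <= m * (2 * n) by rewrite leq_mul2l Hr orbT.
rewrite mulnS in H1; lia.
Qed.

Lemma cardER : #|{: ER}| = m * (2 * n).
Proof. by rewrite !card_prod card_bool !card_ord. Qed.

Lemma cardV : #|{: V}| = m * n.+1.
Proof. by rewrite !card_prod card_option !card_ord. Qed.

Lemma card_edges : m * (2 * n) <= #|edges GG|.
Proof.
rewrite -cardER -(card_imset (mem {: ER}) sset_inj).
apply: subset_leq_card; apply/subsetP => A /imsetP [e _ ->]; exact: sset_edges.
Qed.

Lemma adj_neq (x y : V) : @adj GG x y -> x != y.
Proof. by apply: contraTneq => ->; rewrite (@adj_irr GG). Qed.

Lemma adj_symG (x y : V) : @adj GG x y = @adj GG y x.
Proof. exact: (@adj_sym GG). Qed.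

Lemma third (x y : V) : @adj GG x y -> exists z, @adj GG x z && @adj GG y z.
Proof.
case: x => k a; case: y => l b; rewrite adjGE wadjE => /andP [/eqP E H].
simpl in E; subst l.
case: a H => [i|]; case: b => [j|] H; simpl in H; try by [].
- by exists (k, None); rewrite !adjGE !wadjE /= eqxx.
- by exists (k, Some (ordS i)); rewrite !adjGE !wadjE /= !eqxx.
- by exists (k, Some (ordS j)); rewrite !adjGE !wadjE /= !eqxx.
Qed.

Lemma no_rim_tri (i j l : 'I_n) :
  (j == ordS i) || (i == ordS j) -> (l == ordS j) || (j == ordS l) ->
  (l == ordS i) || (i == ordS l) -> False.
Proof.
have Hi := ltn_ord i; have Hj := ltn_ord j; have Hl := ltn_ord l.
rewrite -!val_eqE !valS /=.
by repeat case: ifP => ?; lia.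
Qed.

Definition Kc := m * (4 * n + 1) + 3 * (m * n.+1) + 3 * m + 3.

Definition tri (x y z : V) :=
  lv x + lv y + lv z + le [set x; y] + le [set y; z] + le [set x; z].

Lemma tri_sym1 x y z : tri x y z = tri y x z.
Proof. rewrite /tri (setUC [set y] [set x]); lia. Qed.

Lemma tri_sym2 x y z : tri x y z = tri x z y.
Proof. rewrite /tri (setUC [set z] [set y]); lia. Qed.

Lemma tri_canon k (i : 'I_n) : tri (k, None) (k, Some i) (k, Some (ordS i)) = Kc.
Proof.
rewrite /tri.
have := le_sset (k, (false, i)); rewrite /= => ->.
have := le_sset (k, (true, i)); rewrite /= => ->.
have := le_sset (k, (false, ordS i)); rewrite /= => ->.
rewrite /lv /elab /erk /= muln0.
change (nat_of_ord (ordS i)) with (i.+1 %% n).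
have T := tri_sum ev n4 (ltn_ord i).
have := congr1 (muln m) T; rewrite !mulnDr => T'.
have Hk := ltn_ord k.
rewrite /Kc; lia.
Qed.

Lemma tri_N k (j l : 'I_n) : (l == ordS j) || (j == ordS l) ->
  tri (k, None) (k, Some j) (k, Some l) = Kc.
Proof.
case/orP => /eqP ->; first exact: tri_canon.
by rewrite tri_sym2 tri_canon.
Qed.

Lemma tri_K x y z : @adj GG x y -> @adj GG y z -> @adj GG x z -> tri x y z = Kc.
Proof.
case: x => k a; case: y => l b; case: z => p c; rewrite !adjGE !wadjE /=.
case/andP => /eqP <- Hab; case/andP => /eqP <- Hbc; case/andP => _ Hac.
move: Hab Hbc Hac.
case: a => [i|]; case: b => [j|]; case: c => [q|] //.
- by move=> H1 H2 H3; case: (no_rim_tri H1 H2 H3).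
- by move=> Hij _ _; rewrite tri_sym2 tri_sym1; apply: tri_N.
- by move=> _ _ H; rewrite tri_sym1; apply: tri_N.
- by move=> _ H _; apply: tri_N.
Qed.
End G.

Lemma perm_iota1 (s : seq nat) : uniq s -> (forall x, x \in s -> 0 < x <= size s) ->
  perm_eq s (iota 1 (size s)).
Proof.
move=> U B.
have Hsub : {subset s <= iota 1 (size s)} by move=> x /B; rewrite mem_iota; lia.
have [Hs Hm] := uniq_min_size U Hsub (eq_leq (size_iota _ _)).
by apply: uniq_perm => //; exact: iota_uniq.
Qed.


Definition C3 := cycle_graph 3.
Definition i0 : 'I_3 := @Ordinal 3 0 isT.
Definition i1 : 'I_3 := @Ordinal 3 1 isT.
Definition i2 : 'I_3 := @Ordinal 3 2 isT.

Lemma ord3_cases (u : 'I_3) : [\/ u = i0, u = i1 | u = i2].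
Proof.
case: u => [[|[|[|u]]] Hu].
- by constructor 1; apply: val_inj.
- by constructor 2; apply: val_inj.
- by constructor 3; apply: val_inj.
- by [].
Qed.

Lemma adjC3 (u v : 'I_3) : @adj C3 u v = (u != v).
Proof.
by case: (ord3_cases u) => ->; case: (ord3_cases v) => ->.
Qed.

Lemma sum3 (F : 'I_3 -> nat) : \sum_(u : 'I_3) F u = F i0 + F i1 + F i2.
Proof.
rewrite (bigD1 i0) // (bigD1 i1) // (bigD1 i2) //= big1 ?addn0 ?addnA //.
by move=> u; case: (ord3_cases u) => ->.
Qed.

Definition s01 : {set 'I_3} := [set i0; i1].
Definition s12 : {set 'I_3} := [set i1; i2].
Definition s02 : {set 'I_3} := [set i0; i2].

Lemma edgesC3 e : e \in edges C3 = [|| e == s01, e == s12 | e == s02].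
Proof.
apply/idP/idP.
  rewrite inE => /existsP [x /existsP [y /andP [Hxy /eqP ->]]].
  move: Hxy; rewrite adjC3.
  by case: (ord3_cases x) => ->; case: (ord3_cases y) => ->;
    rewrite //= /s01 /s12 /s02 ?eqxx ?orbT //= ?[[set i1; i0]]setUC ?[[set i2; i1]]setUC
      ?[[set i2; i0]]setUC ?eqxx ?orbT.
case/or3P => /eqP ->; rewrite inE; apply/existsP.
- by exists i0; apply/existsP; exists i1; rewrite adjC3 eqxx.
- by exists i1; apply/existsP; exists i2; rewrite adjC3 eqxx.
- by exists i0; apply/existsP; exists i2; rewrite adjC3 eqxx.
Qed.

Lemma sumE3 (F : {set 'I_3} -> nat) :
  \sum_(e in edges C3) F e = F s01 + F s12 + F s02.
Proof.
have n01 : s01 != s12 by apply/eqP => /setP /(_ i0); rewrite !inE.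
have n02 : s01 != s02 by apply/eqP => /setP /(_ i1); rewrite !inE.
have n12 : s12 != s02 by apply/eqP => /setP /(_ i1); rewrite !inE.
rewrite (bigD1 s01) ?edgesC3 ?eqxx //= (bigD1 s12) ?edgesC3 ?eqxx ?orbT 1?eq_sym ?n01 //=.
rewrite (bigD1 s02) ?edgesC3 ?eqxx ?orbT //=; last first.
  by rewrite eq_sym n02 eq_sym n12.
rewrite big1 ?addn0 ?addnA //.
move=> e; rewrite edgesC3 => /andP [/andP [/andP [H1 a1] a2] a3].
by case/or3P: H1 => /eqP E; rewrite E eqxx in a1 a2 a3.
Qed.


Theorem theorem6 (n m : nat) :
  ~~ odd n -> 4 <= n -> 2 <= m ->
  H_supermagic (cycle_graph 3) (copies m (wheel n)).
Proof.
move=> ev n4 m2; split.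
  move=> x y Hxy.
  have [z /andP [Hxz Hyz]] := third n4 Hxy.
  have nxy := adj_neq Hxy; have nxz := adj_neq Hxz; have nyz := adj_neq Hyz.
  exists (fun u : 'I_3 => if u == i0 then x else if u == i1 then y else z).
  split; last by exists i0, i1; split => //; rewrite adjC3.
  split.
    move=> u v; case: (ord3_cases u) => ->; case: (ord3_cases v) => -> //= E;
      by rewrite E eqxx in nxy nxz nyz.
  move=> u v; rewrite adjC3.
  have Hyx : adj y x by rewrite adj_symG.
  have Hzx : adj z x by rewrite adj_symG.
  have Hzy : adj z y by rewrite adj_symG.
  case: (ord3_cases u) => ->; case: (ord3_cases v) => ->; rewrite ?eqxx // => _;
    first [exact: Hxy | exact: Hyx | exact: Hxz | exact: Hzx | exact: Hyz | exact: Hzy].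
exists (@lv m n), (@le m n); split; [split|].
- rewrite /total_labeling.
  set s := (_ ++ _).
  have Hs : #|vert (copies m (wheel n))| + #|edges (copies m (wheel n))| = size s.
    by rewrite size_cat !size_map cardT enumT cardE.
  rewrite Hs.
  have cV : #|vert (copies m (wheel n))| = m * n.+1 := cardV m n.
  have cE : m * (2 * n) <= #|edges (copies m (wheel n))| := card_edges m n4.
  apply: perm_iota1.
    rewrite cat_uniq; apply/and3P; split.
    + by rewrite map_inj_uniq ?enum_uniq //; exact: lv_inj.
    + apply/hasPn => y /mapP [A HA ->]; apply/negP => /mapP [x _ Ex].
      rewrite mem_enum in HA; have [e HAe] := edges_sset n4 HA.
      move: Ex; rewrite HAe le_sset //.
      have := elab_range n4 ev e; have := lv_range n4 ev x; lia.
    + rewrite map_inj_in_uniq ?enum_uniq // => A B; rewrite !mem_enum => HA HB.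
      have [e ->] := edges_sset n4 HA; have [e' ->] := edges_sset n4 HB.
      by rewrite !le_sset // => /(elab_inj n4 ev) ->.
  move=> y; rewrite mem_cat -Hs cV => /orP [] /mapP [w Hw ->].
    by have := lv_range n4 ev w; lia.
  rewrite mem_enum in Hw; have [e ->] := edges_sset n4 Hw; rewrite le_sset //.
  by have := elab_range n4 ev e; lia.
- exists (Kc m n) => f [finj fadj].
  rewrite /weight sum3 sumE3 /s01 /s12 /s02 !imsetU1 !imset_set1.
  have A01 : adj (f i0) (f i1) by apply: fadj; rewrite adjC3.
  have A12 : adj (f i1) (f i2) by apply: fadj; rewrite adjC3.
  have A02 : adj (f i0) (f i2) by apply: fadj; rewrite adjC3.
  have := tri_K n4 ev A01 A12 A02; rewrite /tri => <-; by rewrite !addnA.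
- set s := map _ _.
  have Hs : #|vert (copies m (wheel n))| = size s by rewrite size_map cardT enumT.
  rewrite Hs.
  apply: perm_iota1.
    by rewrite map_inj_uniq ?enum_uniq //; exact: lv_inj.
  move=> y /mapP [w _ ->]; rewrite -Hs.
  have cV : #|vert (copies m (wheel n))| = m * n.+1 := cardV m n.
  by rewrite cV; exact: lv_range.
Qed.
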